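(* There is an absolute constant $c>0$ such that the following holds. Consider sequences of integers $k=k(n)\ge1$, $d=d(n)$, $t=t(n)$ with $d\ge 2k$ and $(d+1)\mid t$, and for each $n$ an average-case $d$-runlength NAGT scheme with $t$ tests for $n$ items and $k$ defectives (with average error probability $o_n(1)$). Then for all sufficiently large $n$, $$t\ge c\,\frac{d\log(n/k)}{\log(d/k)}.$$
   Context: $\log$ denotes the base-2 logarithm. A binary $t\times n$ matrix $M$ is $d$-runlength constrained if in every column, any two $1$'s are separated by a run of at least $d$ zeros, i.e. $M_{ij}=M_{i'j}=1$ with $i<i'$ implies $i'-i\ge d+1$. For $x\in\{0,1\}^n$ the NAGT outcome is $M\odot x=\bigvee_{j:x_j=1}M_{\cdot j}$ (entrywise OR). An average-case $d$-runlength NAGT scheme is a random binary $t\times n$ matrix $\mathsf{M}$, every realization of which is $d$-runlength constrained, together with a deterministic decoder $\mathsf{Dec}$, such that $$\frac{1}{\binom nk}\sum_{x\in\{0,1\}^n:\,\mathsf{wgt}(x)=k}\mathbf P_{\mathsf M}\{\mathsf{Dec}(\mathsf M,\mathsf M\odot x)\ne x\}=o_n(1),$$ where $\mathsf{wgt}$ is Hamming weight. *)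

(* Defs.v *)
From Stdlib Require Import Reals.
From mathcomp Require Import all_boot.
Set Implicit Arguments. Unset Strict Implicit. Unset Printing Implicit Defensive.

Definition bmat (t n : nat) := {ffun 'I_t * 'I_n -> bool}.
Definition bvec (m : nat) := {ffun 'I_m -> bool}.

Definition log2 (x : R) : R := Rdiv (ln x) (ln 2).

Definition Rsum (T : finType) (p : pred T) (f : T -> R) : R :=
  foldr Rplus R0 (map f (filter p (enum T))).

(* d-runlength constrained: two 1's in a column are separated by >= d zeros *)
Definition runlength_constrained (d t n : nat) (M : bmat t n) : Prop :=
  forall (i i' : 'I_t) (j : 'I_n),
    M (i, j) -> M (i', j) -> (i < i')%N -> (d.+1 <= i' - i)%N.

Definition wgt (n : nat) (x : bvec n) : nat := #|[pred j | x j]|.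

Definition nagt_outcome (t n : nat) (M : bmat t n) (x : bvec n) : bvec t :=
  [ffun i => [exists j, x j && M (i, j)]].

(* A random t x n matrix = probability mass function on the finite set of
   matrices, every realization (support point) being d-runlength constrained. *)
Definition random_runlength_matrix (d t n : nat) (P : bmat t n -> R) : Prop :=
  (forall M, Rle 0 (P M)) /\
  Rsum predT P = R1 /\
  (forall M, P M <> R0 -> runlength_constrained d M).

Definition avg_error (t n k : nat) (P : bmat t n -> R)
    (Dec : bmat t n -> bvec t -> bvec n) : R :=
  Rmult (Rinv (INR 'C(n, k)))
  (Rsum (fun x : bvec n => wgt x == k)
     (fun x => Rsum predT
        (fun M => if Dec M (nagt_outcome M x) == x then R0 else P M))).

(* Main.v *)
Require Import Defs.
From Stdlib Require Import Reals Lra.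
From mathcomp Require Import all_boot all_order all_algebra.
From mathcomp Require Import Rstruct zify.
From mathcomp Require Import lra.
Import Order.TTheory GRing.Theory Num.Theory.
Set Implicit Arguments. Unset Strict Implicit. Unset Printing Implicit Defensive.

Lemma bin_lb n K : (K <= n -> n ^ K <= K ^ K * 'C(n, K))%N.
Proof.
elim: K n => [|K IH] [|m] //= HK.
have HKm : K <= m by [].
have IHm := IH m HKm.
rewrite expnS (expnS K.+1) mulnAC -(mul_bin_diag m.+1 K) /= -mulnA leq_pmul2l //.
have Hpos : 0 < K ^ K by rewrite expn_gt0; case: K {IH IHm HKm HK}.
rewrite -(leq_pmul2r Hpos).
apply: (@leq_trans (K.+1 ^ K * m ^ K)).
  rewrite -!expnMn; move: HKm; case: K {IH IHm HK Hpos} => [|K] // HKm.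
  rewrite leq_exp2r //; nia.
rewrite (mulnC 'C(m, K)) -mulnA leq_pmul2l ?expn_gt0 // mulnC.
exact: IHm.
Qed.

Section Comb.
Local Open Scope ring_scope.

Lemma RsumE (T : finType) (p : pred T) (f : T -> R) : Rsum p f = (\sum_(x | p x) f x)%R.
Proof.
rewrite /Rsum -big_filter /index_enum -enumT.
elim: (filter p (enum T)) => [|a l IH]; first by rewrite big_nil.
by rewrite big_cons /= IH.
Qed.

Lemma card_sum (T : finType) (b : pred T) : #|b| = (\sum_i (b i : nat))%N.
Proof. by rewrite -sum1_card big_mkcond /=; apply: eq_bigr => i _; rewrite unfold_in; case: (b i). Qed.

Lemma col_bound d t n (M : bmat t n) (j : 'I_n) :
  runlength_constrained d M -> (d.+1 %| t)%N ->
  (#|[pred i : 'I_t | M (i, j)]| <= t %/ d.+1)%N.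
Proof.
move=> HM Hdt.
rewrite cardE.
set s := enum _.
have -> : size s = size (map (fun i : 'I_t => (i %/ d.+1)%N) s) by rewrite size_map.
rewrite -[X in (_ <= X)%N](size_iota 0).
apply: uniq_leq_size.
- rewrite map_inj_in_uniq ?enum_uniq //.
  move=> i i'; rewrite !mem_enum !inE => Hi Hi' Heq.
  apply/val_inj => /=.
  have Hq : (0 < d.+1)%N by [].
  case: (ltngtP i i') => // Hlt.
  + have := HM _ _ _ Hi Hi' Hlt.
    have := divn_eq i d.+1; have := divn_eq i' d.+1.
    have := ltn_pmod i Hq; have := ltn_pmod i' Hq. rewrite Heq. lia.
  + have := HM _ _ _ Hi' Hi Hlt.
    have := divn_eq i d.+1; have := divn_eq i' d.+1.
    have := ltn_pmod i Hq; have := ltn_pmod i' Hq. rewrite Heq. lia.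
- move=> z /mapP [i _ ->]; rewrite mem_iota /= add0n.
  by rewrite ltn_divLR // divnK // ltn_ord.
Qed.

Lemma wgt_out d t n (M : bmat t n) (x : bvec n) :
  runlength_constrained d M -> (d.+1 %| t)%N ->
  (wgt (nagt_outcome M x) <= wgt x * (t %/ d.+1))%N.
Proof.
move=> HM Hdt; rewrite /wgt card_sum.
apply: (@leq_trans (\sum_i \sum_(j | x j) (M (i,j) : nat))%N).
- apply: leq_sum => i _; rewrite /= ffunE.
  case: existsP => [[j /andP [xj Mij]]|_] //.
  by rewrite (bigD1 j) //= Mij leq_addr.
rewrite exchange_big /= -sum_nat_const.
apply: leq_sum => j _.
by rewrite -card_sum; exact: col_bound.
Qed.

Lemma sum_wgt (t : nat) (z : R) : \sum_(y : bvec t) z ^+ wgt y = (z + 1) ^+ t.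
Proof.
have -> : (z + 1) ^+ t = \prod_(i : 'I_t) \sum_(b : bool) (if b then z else 1).
  rewrite -[t in LHS]card_ord -prodr_const; apply: eq_bigr => i _.
  by rewrite big_bool.
rewrite bigA_distr_bigA; apply: eq_bigr => y _.
rewrite /wgt -prodr_const big_mkcond /=; apply: eq_bigr => i _.
by rewrite unfold_in.
Qed.

Definition succset t n (M : bmat t n) (Dec : bmat t n -> bvec t -> bvec n) K :=
  [set x : bvec n | (wgt x == K) && (Dec M (nagt_outcome M x) == x)].

Lemma succ_bound d t n (M : bmat t n) (Dec : bmat t n -> bvec t -> bvec n) K (z : R) :
  runlength_constrained d M -> (d.+1 %| t)%N -> 0 <= z -> z <= 1 ->
  #|succset M Dec K|%:R * z ^+ (K * (t %/ d.+1)) <= (z + 1) ^+ t.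
Proof.
move=> HM Hdt z0 z1.
set A := succset M Dec K.
have inj : {in A &, injective (nagt_outcome M)}.
  move=> x x'; rewrite !inE => /andP [_ /eqP H1] /andP [_ /eqP H2] E.
  by rewrite -H1 -H2 E.
rewrite -(card_in_imset inj) -sum_wgt mulr_natl -sumr_const.
apply: (@le_trans _ _ (\sum_(y in [set nagt_outcome M x | x in A]) z ^+ wgt y)).
  apply: ler_sum => y /imsetP [x xA ->].
  apply: ler_wiXn2l => //.
  move: xA; rewrite inE => /andP [/eqP <- _].
  exact: wgt_out HM Hdt.
rewrite [X in _ <= X](bigID (fun y => y \in [set nagt_outcome M x | x in A])) /=.
by rewrite lerDl sumr_ge0 // => i _; rewrite exprn_ge0.
Qed.

Lemma card_wgt n K : #|[set x : bvec n | wgt x == K]| = 'C(n, K).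
Proof.
pose g (x : bvec n) := [set j | x j].
have ginj : injective g.
  move=> x x' E; apply/ffunP => j.
  have := congr1 (fun B : {set 'I_n} => j \in B) E; by rewrite /g /= !inE.
rewrite -(card_imset _ ginj) -[n in 'C(n, _)]card_ord -card_draws.
apply: eq_card => B; rewrite [in RHS]inE.
apply/imsetP/idP.
- by move=> [x]; rewrite inE => /eqP <- ->; rewrite /wgt; apply/eqP/eq_card => j; rewrite !inE.
- move=> /eqP HB; exists [ffun j => j \in B].
    by rewrite inE /wgt -HB; apply/eqP/eq_card => j; rewrite !inE ffunE.
  by apply/setP => j; rewrite !inE ffunE.
Qed.

Lemma sum_const_pred (T : finType) (p : pred T) (c : R) :
  \sum_(i | p i) c = c * #|p|%:R.
Proof. by rewrite sumr_const mulr_natr. Qed.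

Lemma inner_sum t n (P : bmat t n -> R) (Dec : bmat t n -> bvec t -> bvec n) K M :
  \sum_(x | wgt x == K) (if Dec M (nagt_outcome M x) == x then 0 else P M)
  = P M * ('C(n, K)%:R - #|succset M Dec K|%:R).
Proof.
transitivity (\sum_(x | wgt x == K) (P M - (if Dec M (nagt_outcome M x) == x then P M else 0))).
  by apply: eq_bigr => x _; case: ifP => _; rewrite ?subrr ?subr0.
rewrite sumrB.
have -> : \sum_(x | wgt x == K) (if Dec M (nagt_outcome M x) == x then P M else 0)
   = \sum_(x | (wgt x == K) && (Dec M (nagt_outcome M x) == x)) P M.
  by rewrite big_mkcondr.
rewrite !sum_const_pred mulrBr.
have -> : #|(fun x : bvec n => wgt x == K)| = 'C(n, K).
  by rewrite -card_wgt; apply: eq_card => x; rewrite !inE.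
have -> : #|(fun x : bvec n => (wgt x == K) && (Dec M (nagt_outcome M x) == x))| = #|succset M Dec K|.
  by apply: eq_card => x; rewrite !inE.
by [].
Qed.

Lemma exists_good d t n (P : bmat t n -> R) (Dec : bmat t n -> bvec t -> bvec n) K :
  random_runlength_matrix d P -> avg_error K P Dec < 1/2 -> (0 < 'C(n, K))%N ->
  exists M, runlength_constrained d M /\
            ('C(n, K)%:R : R) < 2 * #|succset M Dec K|%:R.
Proof.
move=> [P0 [P1 Psupp]] Herr HC.
case: (boolP [exists M, (P M != 0) && (('C(n, K)%:R : R) < 2 * #|succset M Dec K|%:R)]).
  case/existsP => M /andP [/eqP PM H]; exists M; split => //; exact: Psupp.
move=> /existsPn Hall; exfalso.
set C : R := 'C(n, K)%:R.
have Cpos : 0 < C by rewrite /C ltr0n.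
have key : forall M, P M * (C / 2) <= P M * (C - #|succset M Dec K|%:R).
  move=> M; have := Hall M; case: (eqVneq (P M) 0) => [->|PM]; first by rewrite !mul0r.
  rewrite /= -leNgt => H; apply: ler_wpM2l; first by apply/RleP.
  rewrite -/C in H; lra.
have Hsum : C / 2 <= \sum_M P M * (C - #|succset M Dec K|%:R).
  apply: (le_trans _ (ler_sum _ (fun M _ => key M))).
  rewrite -mulr_suml.
  have -> : \sum_M P M = 1 by rewrite -RsumE P1.
  by rewrite mul1r.
move: Herr; rewrite /avg_error RsumE.
under eq_bigr => x _ do rewrite RsumE.
rewrite exchange_big /=.
under eq_bigr => M _ do rewrite inner_sum.
rewrite RmultE RinvE INRE -/C => Herr.
have : C^-1 * (C / 2) <= C^-1 * \sum_M P M * (C - #|succset M Dec K|%:R).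
  by apply: ler_wpM2l => //; rewrite invr_ge0 ltW.
rewrite mulrA mulVf ?gt_eqF // mul1r => H2.
move: Herr H2; set S := (X in C^-1 * X). lra.
Qed.



End Comb.

Section Anal.
Local Open Scope R_scope.
Lemma ln_le' x y : 0 < x -> x <= y -> ln x <= ln y.
Proof. intros Hx [H|H]; [left; apply ln_increasing; auto | subst; Lra.lra]. Qed.

Lemma ln_div' x y : 0 < x -> 0 < y -> ln (x / y) = ln x - ln y.
Proof.
intros Hx Hy. have H1 := ln_mult x (/ y) Hx (Rinv_0_lt_compat y Hy).
have H2 := ln_Rinv y Hy. unfold Rdiv. Lra.lra.
Qed.

Lemma ln_1p_le z : 0 < z -> ln (1 + z) <= z.
Proof.
intros Hz. left. rewrite -{2}(ln_exp z). apply ln_increasing. Lra.lra.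
apply exp_ineq1. Lra.lra.
Qed.

Lemma final_ineq (nn k dd bb A C : R) :
  1 <= k -> 2 * k <= dd -> k < nn ->
  (0 <= bb) ->
  ln C >= k * (ln nn - ln k) ->
  0 < C -> C < 2 * A ->
  (bb = 0 -> A <= 1) ->
  (bb = 0 -> 2 <= C) ->
  ln A + k * bb * (ln k - ln (dd + 1)) <= bb * (dd + 1) * ln (k / (dd + 1) + 1) ->
  (1 <= bb \/ bb = 0) ->
  1/5 * (dd * log2 (nn / k)) / log2 (dd / k) <= bb * (dd + 1).
Proof.
intros Hk Hd Hn Hb HC C0 CA Hb0A Hb0C HA Hbc.
destruct Hbc as [Hb1|Hb0]; [| exfalso; specialize (Hb0A Hb0); specialize (Hb0C Hb0); Lra.lra].
assert (A0 : 0 < A) by Lra.lra.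
assert (l2 := ln_lt_2).
assert (Hz : 0 < k / (dd + 1)) by (apply Rdiv_lt_0_compat; Lra.lra).
assert (Hlz : bb * (dd + 1) * ln (k / (dd + 1) + 1) <= k * bb).
{ replace (k * bb) with (bb * (dd + 1) * (k / (dd + 1))) by (field; Lra.lra).
  apply Rmult_le_compat_l. Lra.nra. rewrite Rplus_comm. apply ln_1p_le; auto. }
assert (Hd1 : ln (dd + 1) <= ln 2 + ln dd).
{ rewrite -ln_mult; try (Lra.lra); apply ln_le'; Lra.lra. }
assert (Hlam : ln 2 + ln k <= ln dd).
{ rewrite -ln_mult; try (Lra.lra); apply ln_le'; Lra.lra. }
assert (HlnC : ln C < ln 2 + ln A).
{ rewrite -ln_mult; try (Lra.lra); apply ln_increasing; Lra.lra. }
set (lam := ln dd - ln k) in *.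
set (l := ln nn - ln k) in *.
assert (Hkb : 1 <= k * bb) by Lra.nra.
assert (H1 : k * bb * (ln (dd + 1) - ln k) <= k * bb * (ln 2 + lam)).
{ apply Rmult_le_compat_l; unfold lam; Lra.lra. }
assert (H2 : k * bb * (1 + ln 2 + lam) <= k * bb * (4 * lam)).
{ apply Rmult_le_compat_l; unfold lam; Lra.lra. }
assert (H3 : ln 2 <= k * bb * lam).
{ apply Rle_trans with (1 * lam); [unfold lam; Lra.lra|]. apply Rmult_le_compat_r; unfold lam; Lra.lra. }
assert (Hkl : k * l < 5 * k * bb * lam).
{ assert (k * l <= ln C) by Lra.lra. Lra.nra. }
assert (Hl : l < 5 * bb * lam) by Lra.nra.
assert (E1 : ln (nn / k) = l) by (unfold l; apply ln_div'; Lra.lra).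
assert (E2 : ln (dd / k) = lam) by (unfold lam; apply ln_div'; Lra.lra).
unfold log2; rewrite E1 E2.
assert (Hlam0 : 0 < lam) by (unfold lam; Lra.lra).
replace (1 / 5 * (dd * (l / ln 2)) / (lam / ln 2)) with (dd * l / (5 * lam)) by (field; Lra.lra).
apply (Rmult_le_reg_r (5 * lam)); [Lra.lra|].
unfold Rdiv; rewrite Rmult_assoc Rinv_l ?Rmult_1_r; try (Lra.lra).
Lra.nra.
Qed.


Lemma INR_expn m e : INR (m ^ e)%N = pow (INR m) e.
Proof. elim: e => [|e IH] //=; by rewrite expnS mult_INR IH. Qed.

Lemma small_case (nn k dd T : R) :
  1 <= k -> 2 * k <= dd -> nn <= k -> 0 <= nn -> 0 <= T ->
  1/5 * (dd * log2 (nn / k)) / log2 (dd / k) <= T.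
Proof.
intros Hk Hd Hn Hn0 HT.
assert (l2 := ln_lt_2).
assert (H1 : ln (nn / k) <= 0).
{ destruct (Rlt_or_le 0 (nn / k)) as [Hp|Hp].
  - rewrite -ln_1. apply ln_le'; [assumption|].
    apply (Rmult_le_reg_r k); [Lra.lra|]. unfold Rdiv; rewrite Rmult_assoc Rinv_l; try (Lra.lra).
  - rewrite /ln; case: (Rlt_dec 0 (nn / k)) => Hq; [exfalso; Lra.lra | apply Rle_refl]. }
assert (H2 : ln 2 <= ln (dd / k)).
{ apply ln_le'; [Lra.lra|]. apply (Rmult_le_reg_r k); [Lra.lra|].
  unfold Rdiv; rewrite Rmult_assoc Rinv_l; try (Lra.lra). }
unfold log2.
replace (1 / 5 * (dd * (ln (nn / k) / ln 2)) / (ln (dd / k) / ln 2))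
  with ((dd * ln (nn / k)) * / (5 * ln (dd / k))) by (field; Lra.lra).
apply Rle_trans with 0; [|Lra.lra].
have HI : 0 < / (5 * ln (dd / k)) by (apply Rinv_0_lt_compat; Lra.lra).
move: HI H1; set I := / (5 * ln (dd / k)); set L := ln (nn / k) => HI H1.
have Hdd : 0 <= dd by Lra.lra.
have : dd * L <= 0 by Lra.nra.
move=> H; Lra.nra.
Qed.

End Anal.

Theorem theorem4 :
  exists c : R, Rlt 0 c /\
  forall (k d t : nat -> nat)
         (P : forall n : nat, bmat (t n) n -> R)
         (Dec : forall n : nat, bmat (t n) n -> bvec (t n) -> bvec n),
    (forall n, 1 <= k n)%N ->
    (forall n, 2 * k n <= d n)%N ->
    (forall n, (d n).+1 %| t n)%N ->
    (forall n, random_runlength_matrix (d n) (P n)) ->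
    Un_cv (fun n => avg_error (k n) (P n) (Dec n)) R0 ->
    exists N : nat, forall n : nat, (N <= n)%N ->
      Rle (Rdiv (Rmult c (Rmult (INR (d n)) (log2 (Rdiv (INR n) (INR (k n))))))
                (log2 (Rdiv (INR (d n)) (INR (k n)))))
          (INR (t n)).
Proof.
exists (Rdiv 1 5); split; [Lra.lra|].
intros k d t P Dec Hk Hd Hdt HP Hcv.
destruct (Hcv (Rdiv 1 2)) as [N HN]; [Lra.lra|].
exists N; intros n HnN.
have Herr : Rlt (avg_error (k n) (P n) (Dec n)) (Rdiv 1 2).
  have := HN n (elimT ssrnat.leP HnN); rewrite /R_dist /Rdist Rminus_0_r => H.
  exact: (Rle_lt_trans _ _ _ (Rle_abs _) H).
have HPn := HP n.
set K := k n in Herr *; set D := d n in HPn Herr *.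
have HK := Hk n; have HD := Hd n; have HDT := Hdt n.
rewrite -/K -/D in HK HD HDT.
have HKR : Rle 1 (INR K) by apply: (le_INR 1); apply/ssrnat.leP.
have HDR : Rle (Rmult 2 (INR K)) (INR D).
  have := le_INR _ _ (elimT ssrnat.leP HD); rewrite mult_INR /=; Lra.lra.
have HT0 : Rle 0 (INR (t n)) by apply: pos_INR.
case: (leqP n K) => HnK.
  apply: small_case => //; first by apply: le_INR; apply/ssrnat.leP.
  exact: pos_INR.
have HC : (0 < 'C(n, K))%N by rewrite bin_gt0 ltnW.
have Herr2 : (avg_error K (P n) (Dec n) < 1/2)%R.
  apply/RltP. have H : Rlt (avg_error K (P n) (Dec n)) (Rmult 1 (Rinv (Rplus 1 1))) by Lra.lra.
  exact H.
have [M [HM HCA]] := exists_good HPn Herr2 HC.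
move: HCA; rewrite -natrM ltr_nat => HCA.
set A := #|succset M (Dec n) K| in HCA.
set C := 'C(n, K) in HC HCA.
set b := (t n %/ D.+1)%N.
have HTb : t n = (b * D.+1)%N by rewrite divnK.
have HDpos : Rlt 0 (INR D + 1) by have := pos_INR D; Lra.lra.
set z := Rdiv (INR K) (INR D + 1).
have Hz0 : Rlt 0 z by apply: Rdiv_lt_0_compat; Lra.lra.
have Hz1 : Rle z 1.
  apply: (Rmult_le_reg_r (INR D + 1)) => //.
  rewrite /z /Rdiv Rmult_assoc Rinv_l; Lra.lra.
have Hz0' : (0 <= z)%R by apply/RleP; exact: Rlt_le _ _ Hz0.
have Hz1' : (z <= 1)%R by apply/RleP; exact: Hz1.
have HS := succ_bound (Dec n) K HM HDT Hz0' Hz1'.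
move/RleP: HS; rewrite -INRE -!RpowE -/A => HS.
have HAn : (0 < A)%N by lia.
have HAR : Rlt 0 (INR A) by apply: lt_0_INR; apply/ssrnat.ltP.
have Hln : Rle (ln (Rmult (INR A) (pow z (K * b)))) (ln (pow (Rplus z 1) (t n))).
  apply: ln_le'; last exact: HS.
  apply: Rmult_lt_0_compat => //; exact: pow_lt.
have E1 := ln_mult _ _ HAR (pow_lt _ (K * b) Hz0).
have E2 := ln_pow _ Hz0 (K * b).
have E3 : ln (pow (Rplus z 1) (t n)) = Rmult (INR (t n)) (ln (Rplus z 1)).
  by apply: ln_pow; Lra.lra.
have E4 : ln z = Rminus (ln (INR K)) (ln (INR D + 1)) by apply: ln_div'; Lra.lra.
have HC2 : (2 <= C)%N.
  have Hbl := bin_lb (ltnW HnK).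
  rewrite leqNgt; apply/negP => HC1.
  have : (K ^ K < n ^ K)%N by rewrite ltn_exp2r.
  have : (K ^ K * C <= K ^ K)%N by rewrite -[X in (_ <= X)%N]muln1 leq_mul2l; apply/orP; right; lia.
  move=> H1 H2; have := leq_trans Hbl H1; rewrite leqNgt H2 //.
have HCR : Rle (INR K * (ln (INR n) - ln (INR K))) (ln (INR C)).
  have Hbl := bin_lb (ltnW HnK).
  have H := le_INR _ _ (elimT ssrnat.leP Hbl); rewrite mult_INR !INR_expn in H.
  have HnR : Rlt 0 (INR n) by apply: lt_0_INR; apply/ssrnat.ltP; lia.
  have HCR0 : Rlt 0 (INR C) by apply: lt_0_INR; apply/ssrnat.ltP; lia.
  have := ln_le' (pow_lt _ K HnR) H.
  rewrite ln_pow // ln_mult ?ln_pow //; try (Lra.lra); try (apply: pow_lt; Lra.lra).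
  rewrite -/C; Lra.lra.
rewrite HTb mult_INR S_INR.
rewrite HTb mult_INR S_INR in E3.
rewrite mult_INR in E2.
apply: (final_ineq (A := INR A) (C := INR C)).
- exact: HKR.
- exact: HDR.
- by apply: lt_INR; apply/ssrnat.ltP.
- exact: pos_INR.
- exact: Rle_ge HCR.
- apply: lt_0_INR; apply/ssrnat.ltP; lia.
- have := lt_INR _ _ (elimT ssrnat.ltP HCA); rewrite mult_INR /=; Lra.lra.
- move=> Hb0; have Hb0' : b = 0%N by apply: INR_eq.
  move: HS; rewrite -/b HTb Hb0' muln0 mul0n /= mulr1 => HS; exact: HS.
- move=> _; have := le_INR _ _ (elimT ssrnat.leP HC2); rewrite /=; Lra.lra.
- rewrite -/z -E4; rewrite HTb in Hln; Lra.lra.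
- case Hb: b => [|b']; first by right.
  left; rewrite S_INR; have := pos_INR b'; Lra.lra.
Qed.
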